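(* For a multi-parameter family $\rho(\theta)=\sum_{k=1}^d p_k(\theta)|w_k(\theta)\rangle\langle w_k(\theta)|$ with a chosen smooth spectral decomposition as in the context, equality $H_{SLD}(\theta)=C_L(\theta)$ (as matrices) holds at $\theta$ if and only if $$\langle w_j^{(m)}(\theta)|w_k(\theta)\rangle=0\quad\text{for all } m\in\{1,\dots,p\}\text{ and all } j\neq k \text{ with } p_j(\theta)>0,\ p_k(\theta)>0.$$
   Context: Let $\Theta\subseteq\mathbb{R}^p$ be open and $\rho(\theta)=\sum_{k=1}^d p_k(\theta)|w_k(\theta)\rangle\langle w_k(\theta)|$, where $p_k:\Theta\to[0,1]$ are smooth with $\sum_k p_k=1$ and $|w_1(\theta)\rangle,\dots,|w_d(\theta)\rangle$ is an orthonormal basis of $\mathbb{C}^d$ depending smoothly on $\theta$. Write $|w_k^{(l)}\rangle=\frac{\partial}{\partial\theta^l}|w_k(\theta)\rangle$. Convention: indices $i$ with $p_i(\theta)=0$ are omitted from sums containing $1/p_i$. The $C_L$ quantum information is the $p\times p$ matrix $$C_L(\theta)_{kl}=\sum_i\frac{1}{p_i}\frac{\partial p_i}{\partial\theta^k}\frac{\partial p_i}{\partial\theta^l}+4\,\Re\sum_{i<j}(p_i+p_j)\langle w_i^{(k)}|w_j\rangle\langle w_j|w_i^{(l)}\rangle.$$ The SLD quantum information matrix is $H_{SLD}(\theta)_{kl}=\Re\,\mathrm{tr}\{\rho(\theta)\lambda_k(\theta)\lambda_l(\theta)\}$, where $\lambda_k(\theta)$ is any Hermitian solution of $\frac{\partial\rho}{\partial\theta^k}=\frac12(\rho\lambda_k+\lambda_k\rho)$.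 *)

(* Defs.v *)
From Stdlib Require Import Reals Lra.
Open Scope R_scope.

Fixpoint rsum (n : nat) (f : nat -> R) : R :=
  match n with O => 0 | S m => rsum m f + f m end.

(** * Complex numbers as pairs (real part, imaginary part) *)
Definition Cplx : Type := (R * R)%type.
Definition Cre (z : Cplx) : R := fst z.
Definition Cim (z : Cplx) : R := snd z.
Definition Czero : Cplx := (0, 0).
Definition Cone : Cplx := (1, 0).
Definition Cadd (z w : Cplx) : Cplx := (fst z + fst w, snd z + snd w).
Definition Cmul (z w : Cplx) : Cplx :=
  (fst z * fst w - snd z * snd w, fst z * snd w + snd z * fst w).
Definition Cconj (z : Cplx) : Cplx := (fst z, - snd z).
Definition RtoC (r : R) : Cplx := (r, 0).

Fixpoint Csum (n : nat) (f : nat -> Cplx) : Cplx :=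
  match n with O => Czero | S m => Cadd (Csum m f) (f m) end.

(** vectors of Cplx^d : nat -> Cplx (components 0..d-1);
    d x d matrices : nat -> nat -> Cplx (entries (a,b), a,b < d) *)

Definition braket (d : nat) (u v : nat -> Cplx) : Cplx :=
  Csum d (fun i => Cmul (Cconj (u i)) (v i)).

Definition mmul (d : nat) (A B : nat -> nat -> Cplx) : nat -> nat -> Cplx :=
  fun a b => Csum d (fun c => Cmul (A a c) (B c b)).

Definition mtrace (d : nat) (A : nat -> nat -> Cplx) : Cplx := Csum d (fun a => A a a).

Definition hermitian (d : nat) (A : nat -> nat -> Cplx) : Prop :=
  forall a b, (a < d)%nat -> (b < d)%nat -> A a b = Cconj (A b a).

(** * Parameter space R^p: points are  nat -> R ; only the coordinates
    0..p-1 are parameters (the other coordinates are never varied). *)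
Definition upd (x : nat -> R) (l : nat) (t : R) : nat -> R :=
  fun m => if Nat.eqb m l then t else x m.

Definition near (p : nat) (x y : nat -> R) (eps : R) : Prop :=
  (forall l, (l < p)%nat -> Rabs (y l - x l) < eps) /\
  (forall l, (p <= l)%nat -> y l = x l).

Definition open_p (p : nat) (U : (nat -> R) -> Prop) : Prop :=
  forall x, U x -> exists eps, 0 < eps /\ forall y, near p x y eps -> U y.

Definition cont_on (p : nat) (U : (nat -> R) -> Prop) (f : (nat -> R) -> R) : Prop :=
  forall x, U x -> forall eps, 0 < eps -> exists delta, 0 < delta /\
    forall y, U y -> near p x y delta -> Rabs (f y - f x) < eps.

Definition partial_at (f : (nat -> R) -> R) (l : nat) (x : nat -> R) (v : R) : Prop :=
  derivable_pt_lim (fun t => f (upd x l t)) (x l) v.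

Fixpoint Ck_on (p : nat) (U : (nat -> R) -> Prop) (n : nat) (f : (nat -> R) -> R) : Prop :=
  match n with
  | O => cont_on p U f
  | S m => cont_on p U f /\
      forall l, (l < p)%nat -> exists g : (nat -> R) -> R,
        (forall x, U x -> partial_at f l x (g x)) /\ Ck_on p U m g
  end.

Definition smooth_on (p : nat) (U : (nat -> R) -> Prop) (f : (nat -> R) -> R) : Prop :=
  forall n, Ck_on p U n f.

(** * The family rho(theta) = sum_k p_k(theta) |w_k(theta)><w_k(theta)| ;
    w k i x is the i-th component of |w_k(x)>. *)
Definition rho_of (d : nat) (pk : nat -> (nat -> R) -> R) (w : nat -> nat -> (nat -> R) -> Cplx)
  (x : nat -> R) : nat -> nat -> Cplx :=
  fun a b => Csum d (fun k => Cmul (RtoC (pk k x)) (Cmul (w k a x) (Cconj (w k b x)))).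

Definition H_SLD (d : nat) (rho : nat -> nat -> Cplx) (lam : nat -> nat -> nat -> Cplx)
  (k l : nat) : R :=
  Cre (mtrace d (mmul d rho (mmul d (lam k) (lam l)))).

(** C_L quantum information matrix entry, given the values at theta:
    pv i = p_i(theta), dp i k = dp_i/dtheta^k, wv i = |w_i(theta)>,
    dw i k = |w_i^{(k)}(theta)>. Terms with p_i = 0 are omitted. *)
Definition C_L (d : nat) (pv : nat -> R) (dp : nat -> nat -> R)
  (wv : nat -> nat -> Cplx) (dw : nat -> nat -> nat -> Cplx) (k l : nat) : R :=
  rsum d (fun i => if Req_EM_T (pv i) 0 then 0 else / pv i * dp i k * dp i l)
  + 4 * Cre (Csum d (fun j => Csum j (fun i =>
          Cmul (RtoC (pv i + pv j))
               (Cmul (braket d (dw i k) (wv j)) (braket d (wv j) (dw i l)))))).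

(* Main.v *)
Require Import Defs.
From Stdlib Require Import Reals Lra Lia Psatz Setoid Morphisms FunctionalExtensionality Ring.
Open Scope R_scope.

Arguments Cadd : simpl never.
Arguments Cmul : simpl never.
Arguments Cconj : simpl never.
Arguments RtoC : simpl never.
Arguments Cre : simpl never.
Arguments Cim : simpl never.

Definition Copp (z:Cplx) : Cplx := (- fst z, - snd z).
Definition Csub (z w : Cplx) : Cplx := Cadd z (Copp w).

Lemma C_ext : forall z w : Cplx, fst z = fst w -> snd z = snd w -> z = w.
Proof. intros [a b] [c e]; simpl; intros; subst; reflexivity. Qed.

Lemma Cring : ring_theory Czero Cone Cadd Cmul Csub Copp (@eq Cplx).
Proof.
constructor; intros; apply C_ext;
 repeat match goal with z : Cplx |- _ => destruct z end;
 unfold Cadd, Cmul, Csub, Copp, Czero, Cone; simpl; ring.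
Qed.
Add Ring Cring : Cring.

Lemma Cconj_mul z w : Cconj (Cmul z w) = Cmul (Cconj z) (Cconj w).
Proof. destruct z, w; apply C_ext; unfold Cconj, Cmul; simpl; ring. Qed.
Lemma Cconj_add z w : Cconj (Cadd z w) = Cadd (Cconj z) (Cconj w).
Proof. destruct z, w; apply C_ext; unfold Cconj, Cadd; simpl; ring. Qed.
Lemma Cconj_opp z : Cconj (Copp z) = Copp (Cconj z).
Proof. destruct z; apply C_ext; unfold Cconj, Copp; simpl; ring. Qed.
Lemma Cconj_invol z : Cconj (Cconj z) = z.
Proof. destruct z; apply C_ext; unfold Cconj; simpl; ring. Qed.
Lemma Cconj_RtoC r : Cconj (RtoC r) = RtoC r.
Proof. apply C_ext; unfold Cconj, RtoC; simpl; ring. Qed.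
Lemma Cconj_zero : Cconj Czero = Czero.
Proof. apply C_ext; unfold Cconj, Czero; simpl; ring. Qed.
Lemma Cconj_one : Cconj Cone = Cone.
Proof. apply C_ext; unfold Cconj, Cone; simpl; ring. Qed.
Lemma RtoC_add a b : RtoC (a + b) = Cadd (RtoC a) (RtoC b).
Proof. apply C_ext; unfold Cadd, RtoC; simpl; ring. Qed.
Lemma RtoC_mul a b : RtoC (a * b) = Cmul (RtoC a) (RtoC b).
Proof. apply C_ext; unfold Cmul, RtoC; simpl; ring. Qed.
Lemma RtoC_opp a : RtoC (- a) = Copp (RtoC a).
Proof. apply C_ext; unfold Copp, RtoC; simpl; ring. Qed.
Lemma RtoC_0 : RtoC 0 = Czero. Proof. reflexivity. Qed.
Lemma RtoC_1 : RtoC 1 = Cone. Proof. reflexivity. Qed.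
Lemma Cre_add z w : Cre (Cadd z w) = Cre z + Cre w. Proof. reflexivity. Qed.
Lemma Cre_RtoC_mul r z : Cre (Cmul (RtoC r) z) = r * Cre z.
Proof. unfold Cre, Cmul, RtoC; simpl; ring. Qed.

Lemma Csum_ext n f g : (forall i, (i < n)%nat -> f i = g i) -> Csum n f = Csum n g.
Proof. induction n; simpl; intros H; [reflexivity|]. rewrite IHn by (intros; apply H; lia). rewrite H by lia. reflexivity. Qed.
#[export] Instance Csum_proper n : Proper (pointwise_relation nat eq ==> eq) (Csum n).
Proof. intros f g H. apply Csum_ext. intros; apply H. Qed.
Lemma rsum_ext n f g : (forall i, (i < n)%nat -> f i = g i) -> rsum n f = rsum n g.
Proof. induction n; simpl; intros H; [reflexivity|]. rewrite IHn by (intros; apply H; lia). rewrite H by lia. reflexivity. Qed.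
#[export] Instance rsum_proper n : Proper (pointwise_relation nat eq ==> eq) (rsum n).
Proof. intros f g H. apply rsum_ext. intros; apply H. Qed.

Lemma Csum_add n f g : Csum n (fun i => Cadd (f i) (g i)) = Cadd (Csum n f) (Csum n g).
Proof. induction n; simpl. apply C_ext; unfold Cadd, Czero; simpl; ring. rewrite IHn. ring. Qed.
Lemma Csum_mul_l n c f : Csum n (fun i => Cmul c (f i)) = Cmul c (Csum n f).
Proof. induction n; simpl. apply C_ext; unfold Cmul, Czero; simpl; ring. rewrite IHn. ring. Qed.
Lemma Csum_mul_r n c f : Csum n (fun i => Cmul (f i) c) = Cmul (Csum n f) c.
Proof. induction n; simpl. apply C_ext; unfold Cmul, Czero; simpl; ring. rewrite IHn. ring. Qed.
Lemma Csum_opp n f : Csum n (fun i => Copp (f i)) = Copp (Csum n f).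
Proof. induction n; simpl. apply C_ext; unfold Copp, Czero; simpl; ring. rewrite IHn. ring. Qed.
Lemma Csum_zero n : Csum n (fun _ => Czero) = Czero.
Proof. induction n; simpl; [reflexivity|]. rewrite IHn. ring. Qed.
Lemma Csum_swap n m f : Csum n (fun i => Csum m (fun j => f i j)) = Csum m (fun j => Csum n (fun i => f i j)).
Proof. revert m f; induction n; intros m f; simpl. symmetry; apply Csum_zero.
 rewrite IHn. rewrite <- Csum_add. reflexivity. Qed.
Lemma Cconj_Csum n f : Cconj (Csum n f) = Csum n (fun i => Cconj (f i)).
Proof. induction n; simpl. apply Cconj_zero. rewrite Cconj_add, IHn. reflexivity. Qed.
Lemma Cre_Csum n f : Cre (Csum n f) = rsum n (fun i => Cre (f i)).
Proof. induction n; simpl; [reflexivity|]. rewrite Cre_add, IHn. reflexivity. Qed.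

Definition dl (i k : nat) : Cplx := if Nat.eqb i k then Cone else Czero.
Lemma Csum_delta_l n i f : (i < n)%nat -> Csum n (fun k => Cmul (dl i k) (f k)) = f i.
Proof. induction n; intros H; simpl. lia.
 unfold dl at 2. destruct (Nat.eqb_spec i n).
 - subst. rewrite (Csum_ext _ _ (fun _ => Czero)). rewrite Csum_zero. ring.
   intros k Hk. unfold dl. destruct (Nat.eqb_spec n k). lia. ring.
 - rewrite IHn by lia. ring. Qed.
Lemma Csum_delta_r n i f : (i < n)%nat -> Csum n (fun k => Cmul (f k) (dl k i)) = f i.
Proof. intros H. rewrite <- (Csum_delta_l n i f H). apply Csum_ext; intros k _.
 unfold dl. rewrite Nat.eqb_sym. ring. Qed.

Lemma rsum_plus n f g : rsum n (fun i => f i + g i) = rsum n f + rsum n g.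
Proof. induction n; simpl. ring. rewrite IHn; ring. Qed.
Lemma rsum_minus n f g : rsum n (fun i => f i - g i) = rsum n f - rsum n g.
Proof. induction n; simpl. ring. rewrite IHn; ring. Qed.
Lemma rsum_scal n c f : rsum n (fun i => c * f i) = c * rsum n f.
Proof. induction n; simpl. ring. rewrite IHn; ring. Qed.
Lemma rsum_nonneg n f : (forall i, (i < n)%nat -> 0 <= f i) -> 0 <= rsum n f.
Proof. induction n; simpl; intros H. lra. assert (0 <= f n) by (apply H; lia).
 assert (0 <= rsum n f) by (apply IHn; intros; apply H; lia). lra. Qed.
Lemma rsum_nonneg_zero n f : (forall i, (i < n)%nat -> 0 <= f i) -> rsum n f = 0 ->
  forall i, (i < n)%nat -> f i = 0.
Proof. induction n; simpl; intros H Hs i Hi. lia.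
 assert (0 <= f n) by (apply H; lia).
 assert (0 <= rsum n f) by (apply rsum_nonneg; intros; apply H; lia).
 destruct (Nat.eq_dec i n). subst; lra. apply IHn; try lra; try lia. intros; apply H; lia. Qed.
Lemma rsum_triangle n F : rsum n (fun i => rsum n (fun j => F i j)) =
  rsum n (fun i => F i i) + rsum n (fun j => rsum j (fun i => F i j + F j i)).
Proof. induction n; simpl. ring.
 rewrite !rsum_plus. rewrite IHn. change (rsum n (fun j => F n j)) with (rsum n (F n)). ring. Qed.
Lemma Csum_prod n m f g : Cmul (Csum n f) (Csum m g) = Csum n (fun i => Csum m (fun j => Cmul (f i) (g j))).
Proof. rewrite <- Csum_mul_r. apply Csum_ext; intros i _. rewrite <- Csum_mul_l. reflexivity. Qed.
Lemma rsum_zero n : rsum n (fun _ => 0) = 0.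
Proof. induction n; simpl; [reflexivity|rewrite IHn; ring]. Qed.
Lemma braket_conj d u v : Cconj (braket d u v) = braket d v u.
Proof. unfold braket. rewrite Cconj_Csum. apply Csum_ext; intros. rewrite Cconj_mul, Cconj_invol. ring. Qed.
Lemma Cscal_inv r z w : Cmul (RtoC r) z = w -> r <> 0 -> z = Cmul (RtoC (/ r)) w.
Proof. intros H Hr; subst. destruct z; apply C_ext; unfold Cmul, RtoC; simpl; field; auto. Qed.
Lemma reorg (a b c e : R) : a + b - (c + e) = (a - c) + (b - e).
Proof. ring. Qed.

Lemma dplus f g x a b : derivable_pt_lim f x a -> derivable_pt_lim g x b ->
  derivable_pt_lim (fun t => f t + g t) x (a + b).
Proof. intros; exact (derivable_pt_lim_plus f g x a b H H0). Qed.
Lemma dminus f g x a b : derivable_pt_lim f x a -> derivable_pt_lim g x b ->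
  derivable_pt_lim (fun t => f t - g t) x (a - b).
Proof. intros; exact (derivable_pt_lim_minus f g x a b H H0). Qed.
Lemma dmult f g x a b : derivable_pt_lim f x a -> derivable_pt_lim g x b ->
  derivable_pt_lim (fun t => f t * g t) x (a * g x + f x * b).
Proof. intros; exact (derivable_pt_lim_mult f g x a b H H0). Qed.
Lemma dopp f x a : derivable_pt_lim f x a -> derivable_pt_lim (fun t => - f t) x (- a).
Proof. intros; exact (derivable_pt_lim_opp f x a H). Qed.
Lemma dconst c x : derivable_pt_lim (fun _ => c) x 0.
Proof. exact (derivable_pt_lim_const c x). Qed.
Lemma dval f x a b : derivable_pt_lim f x a -> a = b -> derivable_pt_lim f x b.
Proof. intros; subst; auto. Qed.
Lemma dlocal f g x l : derivable_pt_lim g x l ->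
  (exists eps, 0 < eps /\ forall t, Rabs (t - x) < eps -> f t = g t) ->
  derivable_pt_lim f x l.
Proof.
 intros Hg [e [He Hfg]] eps Heps. destruct (Hg eps Heps) as [del Hd].
 assert (Hm : 0 < Rmin del e) by (apply Rmin_pos; [apply cond_pos|lra]).
 exists (mkposreal _ Hm). intros h Hh Hlt. simpl in Hlt.
 rewrite !Hfg. apply Hd; auto. apply Rlt_le_trans with (1 := Hlt); apply Rmin_l.
 unfold Rminus; rewrite Rplus_opp_r, Rabs_R0; lra.
 replace (x + h - x) with h by ring. apply Rlt_le_trans with (1 := Hlt); apply Rmin_r.
Qed.

Definition cderiv (F : R -> Cplx) (x : R) (v : Cplx) : Prop :=
  derivable_pt_lim (fun t => Cre (F t)) x (Cre v) /\
  derivable_pt_lim (fun t => Cim (F t)) x (Cim v).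

Lemma cderiv_add F G x a b : cderiv F x a -> cderiv G x b ->
  cderiv (fun t => Cadd (F t) (G t)) x (Cadd a b).
Proof. intros [H1 H2] [H3 H4]; split; [exact (dplus _ _ _ _ _ H1 H3) | exact (dplus _ _ _ _ _ H2 H4)]. Qed.
Lemma cderiv_mul F G x a b : cderiv F x a -> cderiv G x b ->
  cderiv (fun t => Cmul (F t) (G t)) x (Cadd (Cmul a (G x)) (Cmul (F x) b)).
Proof. intros [H1 H2] [H3 H4]; split.
 - eapply dval. exact (dminus _ _ _ _ _ (dmult _ _ _ _ _ H1 H3) (dmult _ _ _ _ _ H2 H4)).
   unfold Cre, Cim, Cadd, Cmul; simpl; ring.
 - eapply dval. exact (dplus _ _ _ _ _ (dmult _ _ _ _ _ H1 H4) (dmult _ _ _ _ _ H2 H3)).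
   unfold Cre, Cim, Cadd, Cmul; simpl; ring.
Qed.
Lemma cderiv_conj F x a : cderiv F x a -> cderiv (fun t => Cconj (F t)) x (Cconj a).
Proof. intros [H1 H2]; split. exact H1. exact (dopp _ _ _ H2). Qed.
Lemma cderiv_RtoC f x a : derivable_pt_lim f x a -> cderiv (fun t => RtoC (f t)) x (RtoC a).
Proof. intros H; split. exact H. exact (dconst 0 x). Qed.
Lemma cderiv_const c x : cderiv (fun _ => c) x Czero.
Proof. split; [exact (dconst _ x) | exact (dconst _ x)]. Qed.
Lemma cderiv_Csum n F x v : (forall i, (i < n)%nat -> cderiv (fun t => F i t) x (v i)) ->
  cderiv (fun t => Csum n (fun i => F i t)) x (Csum n v).
Proof. induction n; intros H; simpl. apply cderiv_const.
 apply cderiv_add. apply IHn; intros; apply H; lia. apply H; lia. Qed.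
Lemma cderiv_unique F x a b : cderiv F x a -> cderiv F x b -> a = b.
Proof. intros [H1 H2] [H3 H4]. apply C_ext. exact (uniqueness_limite _ _ _ _ H1 H3).
 exact (uniqueness_limite _ _ _ _ H2 H4). Qed.
Lemma cderiv_local F G x v : cderiv G x v ->
  (exists eps, 0 < eps /\ forall t, Rabs (t - x) < eps -> F t = G t) -> cderiv F x v.
Proof. intros [H1 H2] [e [He Hfg]]; split; eapply dlocal; eauto;
 exists e; split; auto; intros t Ht; rewrite Hfg; auto. Qed.
Lemma cderiv_ext F G x v : cderiv G x v -> (forall t, F t = G t) -> cderiv F x v.
Proof. intros H E. replace F with G; auto. apply functional_extensionality; intros; auto. Qed.

Definition ONB (d : nat) (W : nat -> nat -> Cplx) : Prop :=
  forall i j, (i < d)%nat -> (j < d)%nat -> braket d (W i) (W j) = dl i j.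

Lemma dl_refl i : dl i i = Cone. Proof. unfold dl; rewrite Nat.eqb_refl; reflexivity. Qed.
Lemma Cconj_dl i j : Cconj (dl i j) = dl i j.
Proof. unfold dl; destruct (Nat.eqb i j); [apply Cconj_one|apply Cconj_zero]. Qed.

Lemma normsq_nonneg z : 0 <= Cre (Cmul z (Cconj z)).
Proof. destruct z; unfold Cre, Cmul, Cconj; simpl. nra. Qed.
Lemma normsq_zero z : Cre (Cmul z (Cconj z)) = 0 -> z = Czero.
Proof. destruct z as [a b]; unfold Cre, Cmul, Cconj; simpl; intros H.
 apply C_ext; unfold Czero; simpl; nra. Qed.

Lemma w_complete d W : ONB d W -> forall a b, (a < d)%nat -> (b < d)%nat ->
  Csum d (fun k => Cmul (W k a) (Cconj (W k b))) = dl a b.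
Proof.
 intros ON.
 set (B := fun a b => Csum d (fun k => Cmul (W k a) (Cconj (W k b)))).
 set (Q := Csum d (fun _ => Cone)).
 assert (HBaa : Csum d (fun a => B a a) = Q).
 { unfold B, Q. rewrite Csum_swap. apply Csum_ext; intros k Hk.
   rewrite <- (dl_refl k). rewrite <- (ON k k Hk Hk). unfold braket.
   apply Csum_ext; intros; ring. }
 assert (T1 : Csum d (fun a => Csum d (fun b => Cmul (dl a b) (Cconj (dl a b)))) = Q).
 { unfold Q; apply Csum_ext; intros a Ha. rewrite Csum_delta_l by auto.
   rewrite Cconj_dl, dl_refl. reflexivity. }
 assert (T2 : Csum d (fun a => Csum d (fun b => Cmul (dl a b) (Cconj (B a b)))) = Q).
 { rewrite (Csum_ext _ _ (fun a => Cconj (B a a))).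
   rewrite <- Cconj_Csum, HBaa. unfold Q; rewrite Cconj_Csum, Cconj_one; reflexivity.
   intros a Ha. rewrite Csum_delta_l by auto. reflexivity. }
 assert (T3 : Csum d (fun a => Csum d (fun b => Cmul (B a b) (Cconj (dl a b)))) = Q).
 { rewrite <- HBaa. apply Csum_ext; intros a Ha.
   rewrite (Csum_ext _ _ (fun b => Cmul (dl a b) (B a b))). apply Csum_delta_l; auto.
   intros; rewrite Cconj_dl; ring. }
 assert (T4 : Csum d (fun a => Csum d (fun b => Cmul (B a b) (Cconj (B a b)))) = Q).
 { transitivity (Csum d (fun a => Csum d (fun b => Csum d (fun k => Csum d (fun k' =>
      Cmul (Cmul (Cconj (W k' a)) (W k a)) (Cmul (Cconj (W k b)) (W k' b))))))).
   { apply Csum_ext; intros a Ha; apply Csum_ext; intros b Hb. unfold B.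
     rewrite Cconj_Csum. rewrite <- Csum_mul_r. apply Csum_ext; intros k Hk.
     rewrite <- Csum_mul_l. apply Csum_ext; intros k' Hk'. rewrite Cconj_mul, Cconj_invol. ring. }
   rewrite (Csum_ext _ _ (fun a => Csum d (fun k => Csum d (fun b => Csum d (fun k' =>
      Cmul (Cmul (Cconj (W k' a)) (W k a)) (Cmul (Cconj (W k b)) (W k' b))))))).
   2:{ intros a Ha. apply Csum_swap. }
   rewrite (Csum_ext _ _ (fun a => Csum d (fun k => Csum d (fun k' => Csum d (fun b =>
      Cmul (Cmul (Cconj (W k' a)) (W k a)) (Cmul (Cconj (W k b)) (W k' b))))))).
   2:{ intros a Ha. apply Csum_ext; intros k Hk. apply Csum_swap. }
   rewrite Csum_swap.
   unfold Q. apply Csum_ext; intros k Hk.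
   rewrite Csum_swap.
   rewrite (Csum_ext _ _ (fun k' => Cmul (dl k' k) (dl k k'))).
   2:{ intros k' Hk'. rewrite <- (ON k' k Hk' Hk), <- (ON k k' Hk Hk'). unfold braket.
       rewrite <- Csum_mul_r. apply Csum_ext; intros a Ha. rewrite <- Csum_mul_l. reflexivity. }
   rewrite (Csum_ext _ _ (fun k' => Cmul (dl k k') (dl k k'))).
   rewrite Csum_delta_l by auto. apply dl_refl.
   intros k' _. unfold dl. rewrite Nat.eqb_sym. reflexivity. }
 assert (S0 : Csum d (fun a => Csum d (fun b => Cmul (Csub (dl a b) (B a b)) (Cconj (Csub (dl a b) (B a b))))) = Czero).
 { rewrite (Csum_ext _ _ (fun a => Cadd (Cadd (Csum d (fun b => Cmul (dl a b) (Cconj (dl a b))))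
          (Copp (Csum d (fun b => Cmul (dl a b) (Cconj (B a b))))))
          (Cadd (Copp (Csum d (fun b => Cmul (B a b) (Cconj (dl a b)))))
                (Csum d (fun b => Cmul (B a b) (Cconj (B a b))))))).
   rewrite Csum_add, Csum_add, Csum_add, Csum_opp, Csum_opp, T1, T2, T3, T4. ring.
   intros a Ha. rewrite <- Csum_opp, <- Csum_opp, <- !Csum_add. apply Csum_ext; intros b Hb.
   unfold Csub. rewrite Cconj_add, Cconj_opp. ring. }
 assert (R0 := f_equal Cre S0). rewrite Cre_Csum in R0.
 rewrite (rsum_ext _ _ (fun a => rsum d (fun b => Cre (Cmul (Csub (dl a b) (B a b)) (Cconj (Csub (dl a b) (B a b))))))) in R0.
 2:{ intros; apply Cre_Csum. }
 intros a b Ha Hb.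
 assert (Hrow := rsum_nonneg_zero d _ (fun a _ => rsum_nonneg d _ (fun b _ => normsq_nonneg _)) R0 a Ha).
 assert (He := rsum_nonneg_zero d _ (fun b _ => normsq_nonneg _) Hrow b Hb).
 apply normsq_zero in He. fold (B a b).
 assert (E2 : dl a b = Cadd (Csub (dl a b) (B a b)) (B a b)) by (unfold Csub; ring).
 rewrite He in E2. rewrite E2. ring.
Qed.

Definition sand d (W : nat -> nat -> Cplx) (X : nat -> nat -> Cplx) i j : Cplx :=
  Csum d (fun a => Csum d (fun b => Cmul (Cmul (Cconj (W i a)) (X a b)) (W j b))).

Lemma sand_ext d W X Y i j : (forall a b, (a < d)%nat -> (b < d)%nat -> X a b = Y a b) ->
  sand d W X i j = sand d W Y i j.
Proof. intros H; unfold sand; apply Csum_ext; intros a Ha; apply Csum_ext; intros b Hb; rewrite H; auto. Qed.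
Lemma sand_add d W X Y i j : sand d W (fun a b => Cadd (X a b) (Y a b)) i j = Cadd (sand d W X i j) (sand d W Y i j).
Proof. unfold sand. rewrite <- Csum_add. apply Csum_ext; intros a Ha. rewrite <- Csum_add.
 apply Csum_ext; intros; ring. Qed.
Lemma sand_scal d W c X i j : sand d W (fun a b => Cmul c (X a b)) i j = Cmul c (sand d W X i j).
Proof. unfold sand. rewrite <- Csum_mul_l. apply Csum_ext; intros a Ha. rewrite <- Csum_mul_l.
 apply Csum_ext; intros; ring. Qed.
Lemma sand_rank d W c U V i j :
  sand d W (fun a b => Csum d (fun k => Cmul (c k) (Cmul (U k a) (Cconj (V k b))))) i j =
  Csum d (fun k => Cmul (c k) (Cmul (braket d (W i) (U k)) (braket d (V k) (W j)))).
Proof. unfold sand, braket.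
 transitivity (Csum d (fun a => Csum d (fun b => Csum d (fun k =>
   Cmul (c k) (Cmul (Cmul (Cconj (W i a)) (U k a)) (Cmul (Cconj (V k b)) (W j b))))))).
 { apply Csum_ext; intros a Ha; apply Csum_ext; intros b Hb.
   rewrite <- Csum_mul_l, <- Csum_mul_r. apply Csum_ext; intros; ring. }
 rewrite (Csum_ext _ _ (fun a => Csum d (fun k => Csum d (fun b =>
   Cmul (c k) (Cmul (Cmul (Cconj (W i a)) (U k a)) (Cmul (Cconj (V k b)) (W j b))))))).
 2:{ intros; apply Csum_swap. }
 rewrite Csum_swap. apply Csum_ext; intros k Hk.
 rewrite Csum_prod, <- Csum_mul_l. apply Csum_ext; intros a Ha.
 rewrite <- Csum_mul_l. apply Csum_ext; intros; ring.
Qed.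

Lemma sand_herm d W X i j : hermitian d X -> sand d W X j i = Cconj (sand d W X i j).
Proof. intros H. unfold sand. rewrite Cconj_Csum. rewrite Csum_swap. apply Csum_ext; intros a Ha.
 rewrite Cconj_Csum. apply Csum_ext; intros b Hb. rewrite H by auto.
 rewrite !Cconj_mul, !Cconj_invol. ring. Qed.

Lemma trace_rho d W P X : mtrace d (mmul d (fun a b => Csum d (fun k => Cmul (RtoC (P k)) (Cmul (W k a) (Cconj (W k b))))) X) =
  Csum d (fun k => Cmul (RtoC (P k)) (sand d W X k k)).
Proof. unfold mtrace, mmul, sand.
 transitivity (Csum d (fun a => Csum d (fun c => Csum d (fun k =>
   Cmul (RtoC (P k)) (Cmul (Cmul (Cconj (W k c)) (X c a)) (W k a)))))).
 { apply Csum_ext; intros a Ha; apply Csum_ext; intros c Hc. rewrite <- Csum_mul_r.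
   apply Csum_ext; intros; ring. }
 rewrite (Csum_ext _ _ (fun a => Csum d (fun k => Csum d (fun c =>
   Cmul (RtoC (P k)) (Cmul (Cmul (Cconj (W k c)) (X c a)) (W k a)))))).
 2:{ intros; apply Csum_swap. }
 rewrite Csum_swap. apply Csum_ext; intros k Hk. rewrite Csum_swap. rewrite <- Csum_mul_l.
 apply Csum_ext; intros c Hc. rewrite <- Csum_mul_l. apply Csum_ext; intros; ring.
Qed.

Lemma parseval d W u v : ONB d W ->
  Csum d (fun m => Cmul (Csum d (fun c => Cmul (u c) (W m c))) (Csum d (fun c => Cmul (Cconj (W m c)) (v c)))) =
  Csum d (fun c => Cmul (u c) (v c)).
Proof. intros ON.
 transitivity (Csum d (fun m => Csum d (fun c => Csum d (fun c' => Cmul (Cmul (u c) (v c')) (Cmul (W m c) (Cconj (W m c'))))))).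
 { apply Csum_ext; intros m Hm. rewrite <- Csum_mul_r. apply Csum_ext; intros c Hc.
   rewrite <- Csum_mul_l. apply Csum_ext; intros; ring. }
 rewrite Csum_swap. apply Csum_ext; intros c Hc. rewrite Csum_swap.
 rewrite (Csum_ext _ _ (fun c' => Cmul (dl c c') (Cmul (u c) (v c')))).
 rewrite Csum_delta_l by auto. reflexivity.
 intros c' Hc'. rewrite Csum_mul_l. rewrite (w_complete d W ON c c' Hc Hc'). ring.
Qed.

Lemma sand_mmul d W X Y i j : ONB d W ->
  sand d W (mmul d X Y) i j = Csum d (fun m => Cmul (sand d W X i m) (sand d W Y m j)).
Proof. intros ON.
 set (u := fun c => Csum d (fun a => Cmul (Cconj (W i a)) (X a c))).
 set (v := fun c => Csum d (fun b => Cmul (Y c b) (W j b))).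
 rewrite (Csum_ext _ _ (fun m => Cmul (Csum d (fun c => Cmul (u c) (W m c))) (Csum d (fun c => Cmul (Cconj (W m c)) (v c))))).
 2:{ intros m Hm. f_equal.
     - unfold sand, u. rewrite Csum_swap. apply Csum_ext; intros c Hc. rewrite <- Csum_mul_r. reflexivity.
     - unfold sand, v. apply Csum_ext; intros c Hc. rewrite <- Csum_mul_l. apply Csum_ext; intros; ring. }
 rewrite parseval by auto. unfold sand, mmul, u, v.
 transitivity (Csum d (fun a => Csum d (fun c => Csum d (fun b => Cmul (Cmul (Cconj (W i a)) (X a c)) (Cmul (Y c b) (W j b)))))).
 { apply Csum_ext; intros a Ha. rewrite Csum_swap. apply Csum_ext; intros b Hb.
   rewrite <- Csum_mul_l, <- Csum_mul_r. apply Csum_ext; intros; ring. }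
 rewrite Csum_swap. apply Csum_ext; intros c Hc. rewrite <- Csum_mul_r.
 apply Csum_ext; intros a Ha. rewrite <- Csum_mul_l. reflexivity.
Qed.

Lemma core (d p : nat) (W : nat -> nat -> Cplx) (P : nat -> R) (dp : nat -> nat -> R)
  (dw : nat -> nat -> nat -> Cplx) (drho lam : nat -> nat -> nat -> Cplx)
  (ON : ONB d W)
  (Pnn : forall i, (i < d)%nat -> 0 <= P i)
  (A1 : forall m i j, (m < p)%nat -> (i < d)%nat -> (j < d)%nat ->
      Cadd (braket d (dw i m) (W j)) (braket d (W i) (dw j m)) = Czero)
  (A2 : forall l a b, (l < p)%nat -> (a < d)%nat -> (b < d)%nat ->
      drho l a b = Csum d (fun k => Cadd (Cmul (RtoC (dp k l)) (Cmul (W k a) (Cconj (W k b))))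
         (Cmul (RtoC (P k)) (Cadd (Cmul (dw k l a) (Cconj (W k b))) (Cmul (W k a) (Cconj (dw k l b)))))))
  (Hlam : forall k, (k < p)%nat ->
     hermitian d (lam k) /\
     forall a b, (a < d)%nat -> (b < d)%nat ->
       drho k a b =
       Cmul (RtoC (/ 2))
         (Cadd (mmul d (fun a b => Csum d (fun k => Cmul (RtoC (P k)) (Cmul (W k a) (Cconj (W k b))))) (lam k) a b)
               (mmul d (lam k) (fun a b => Csum d (fun k => Cmul (RtoC (P k)) (Cmul (W k a) (Cconj (W k b))))) a b))) :
  (forall k l, (k < p)%nat -> (l < p)%nat ->
     Cre (mtrace d (mmul d (fun a b => Csum d (fun k => Cmul (RtoC (P k)) (Cmul (W k a) (Cconj (W k b))))) (mmul d (lam k) (lam l)))) =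
     C_L d P dp W dw k l)
  <->
  (forall m j k, (m < p)%nat -> (j < d)%nat -> (k < d)%nat -> j <> k ->
     0 < P j -> 0 < P k -> braket d (dw j m) (W k) = Czero).
Proof.
 set (rhoW := fun a b => Csum d (fun k => Cmul (RtoC (P k)) (Cmul (W k a) (Cconj (W k b))))).
 set (aa := fun m i j => braket d (W i) (dw j m)).
 set (M := fun k i j => sand d W (lam k) i j).
 assert (A1' : forall m i j, (m < p)%nat -> (i < d)%nat -> (j < d)%nat ->
      braket d (dw i m) (W j) = Copp (aa m i j)).
 { intros m i j Hm Hi Hj. unfold aa.
   transitivity (Cadd (Cadd (braket d (dw i m) (W j)) (braket d (W i) (dw j m))) (Copp (braket d (W i) (dw j m)))).
   ring. rewrite A1 by auto. ring. }
 assert (Hsr : forall i m, (i < d)%nat -> (m < d)%nat -> sand d W rhoW i m = Cmul (RtoC (P i)) (dl i m)).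
 { intros i m Hi Hm. unfold rhoW. rewrite (sand_rank d W (fun k => RtoC (P k)) W W).
   rewrite (Csum_ext _ _ (fun k => Cmul (dl i k) (Cmul (RtoC (P k)) (dl k m)))).
   rewrite Csum_delta_l by auto. reflexivity.
   intros k Hk. rewrite ON, ON by auto. ring. }
 assert (HE : forall k i j, (k < p)%nat -> (i < d)%nat -> (j < d)%nat ->
   sand d W (drho k) i j = Cadd (Cmul (RtoC (dp i k)) (dl i j)) (Cmul (RtoC (P j - P i)) (aa k i j))).
 { intros k i j Hk Hi Hj.
   rewrite (sand_ext d W (drho k) (fun a b => Cadd (Cadd
      (Csum d (fun k' => Cmul (RtoC (dp k' k)) (Cmul (W k' a) (Cconj (W k' b)))))
      (Csum d (fun k' => Cmul (RtoC (P k')) (Cmul (dw k' k a) (Cconj (W k' b))))))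
      (Csum d (fun k' => Cmul (RtoC (P k')) (Cmul (W k' a) (Cconj (dw k' k b))))))).
   2:{ intros a b Ha Hb. rewrite A2 by auto. rewrite <- !Csum_add. apply Csum_ext; intros; ring. }
   rewrite !sand_add.
   rewrite (sand_rank d W (fun k' => RtoC (dp k' k)) W W).
   rewrite (sand_rank d W (fun k' => RtoC (P k')) (fun k' => dw k' k) W).
   rewrite (sand_rank d W (fun k' => RtoC (P k')) W (fun k' => dw k' k)).
   rewrite (Csum_ext _ _ (fun k' => Cmul (dl i k') (Cmul (RtoC (dp k' k)) (dl k' j)))).
   2:{ intros k' Hk'. rewrite ON, ON by auto. ring. }
   rewrite Csum_delta_l by auto.
   rewrite (Csum_ext _ _ (fun k' => Cmul (Cmul (RtoC (P k')) (braket d (W i) (dw k' k))) (dl k' j))).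
   2:{ intros k' Hk'. rewrite (ON k' j) by auto. ring. }
   rewrite Csum_delta_r by auto.
   rewrite (Csum_ext _ _ (fun k' => Cmul (dl i k') (Cmul (RtoC (P k')) (braket d (dw k' k) (W j))))).
   2:{ intros k' Hk'. rewrite (ON i k') by auto. ring. }
   rewrite Csum_delta_l by auto.
   rewrite A1' by auto. unfold Rminus. rewrite RtoC_add, RtoC_opp. fold (aa k i j). ring. }
 assert (HS : forall k i j, (k < p)%nat -> (i < d)%nat -> (j < d)%nat ->
   sand d W (drho k) i j = Cmul (RtoC (/2 * (P i + P j))) (M k i j)).
 { intros k i j Hk Hi Hj. destruct (Hlam k Hk) as [Hh Hl].
   rewrite (sand_ext d W (drho k) _ i j Hl). rewrite sand_scal, sand_add.
   rewrite !sand_mmul by auto. fold rhoW.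
   rewrite (Csum_ext _ _ (fun m => Cmul (dl i m) (Cmul (RtoC (P i)) (M k m j)))).
   2:{ intros m Hm. rewrite Hsr by auto. unfold M. ring. }
   rewrite Csum_delta_l by auto.
   rewrite (Csum_ext _ _ (fun m => Cmul (Cmul (M k i m) (RtoC (P m))) (dl m j))).
   2:{ intros m Hm. rewrite Hsr by auto. unfold M. ring. }
   rewrite Csum_delta_r by auto.
   rewrite RtoC_mul, RtoC_add. unfold M. ring. }
 assert (HH : forall k l, (k < p)%nat -> (l < p)%nat ->
   Cre (mtrace d (mmul d rhoW (mmul d (lam k) (lam l)))) =
   rsum d (fun i => rsum d (fun j => P i * Cre (Cmul (M k i j) (M l j i))))).
 { intros k l Hk Hl. unfold rhoW. rewrite trace_rho. rewrite Cre_Csum. apply rsum_ext; intros i Hi.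
   rewrite Cre_RtoC_mul, sand_mmul by auto. rewrite Cre_Csum, <- rsum_scal. reflexivity. }
 assert (Mdiag : forall k i, (k < p)%nat -> (i < d)%nat -> 0 < P i -> M k i i = RtoC (dp i k / P i)).
 { intros k i Hk Hi HP. assert (E := HS k i i Hk Hi Hi). rewrite HE in E by auto.
   rewrite dl_refl in E. replace (P i - P i) with 0 in E by ring.
   symmetry in E. apply Cscal_inv in E; [|lra]. rewrite E. rewrite RtoC_0.
   apply C_ext; unfold Cmul, Cadd, RtoC, Czero, Cone; simpl; field; lra. }
 assert (aa_anti : forall m i j, (m < p)%nat -> (i < d)%nat -> (j < d)%nat ->
   aa m j i = Copp (Cconj (aa m i j))).
 { intros m i j Hm Hi Hj. change (aa m j i) with (braket d (W j) (dw i m)).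
   rewrite <- braket_conj. rewrite A1' by auto. rewrite Cconj_opp. reflexivity. }
 assert (Moff : forall k i j, (k < p)%nat -> (i < d)%nat -> (j < d)%nat -> i <> j -> 0 < P i + P j ->
   M k i j = Cmul (RtoC (2 / (P i + P j) * (P j - P i))) (aa k i j)).
 { intros k i j Hk Hi Hj Hij HP. assert (E := HS k i j Hk Hi Hj). rewrite HE in E by auto.
   assert (Hd : dl i j = Czero) by (unfold dl; destruct (Nat.eqb_spec i j); [contradiction|reflexivity]).
   rewrite Hd in E. symmetry in E. apply Cscal_inv in E; [|lra]. rewrite E.
   destruct (aa k i j). apply C_ext; unfold Cmul, Cadd, RtoC, Czero; simpl; field; lra. }
 assert (Diff : forall k l, (k < p)%nat -> (l < p)%nat ->
   C_L d P dp W dw k l - Cre (mtrace d (mmul d rhoW (mmul d (lam k) (lam l)))) =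
   rsum d (fun j => rsum j (fun i => 16 * P i * P j * / (P i + P j) * Cre (Cmul (aa k i j) (Cconj (aa l i j)))))).
 { intros k l Hk Hl. rewrite HH by auto. rewrite rsum_triangle. unfold C_L.
   rewrite Cre_Csum. setoid_rewrite Cre_Csum.
   rewrite <- rsum_scal. rewrite reorg, <- !rsum_minus.
   rewrite (rsum_ext d _ (fun _ => 0)), rsum_zero, Rplus_0_l.
   2:{ intros i Hi. destruct (Req_EM_T (P i) 0) as [E0|E0].
       - rewrite E0; ring.
       - assert (0 < P i) by (assert (h := Pnn i Hi); lra).
         rewrite !Mdiag by auto. unfold Cre, Cmul, RtoC; simpl. field. auto. }
   apply rsum_ext; intros j Hj. rewrite <- rsum_scal, <- rsum_minus. apply rsum_ext; intros i Hi.
   assert (Hid : (i < d)%nat) by lia.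
   rewrite A1' by auto. change (braket d (W j) (dw i l)) with (aa l j i).
   rewrite (aa_anti l i j) by auto.
   assert (hi := Pnn i Hid). assert (hj := Pnn j Hj).
   destruct (Req_dec (P i + P j) 0) as [E0|E0].
   - assert (P i = 0) by lra. assert (P j = 0) by lra.
     replace (P i) with 0 by auto. replace (P j) with 0 by auto. rewrite Rplus_0_l.
     destruct (aa k i j), (aa l i j). unfold Cre, Cmul, RtoC, Copp, Cconj; simpl. ring.
   - assert (0 < P i + P j) by lra.
     rewrite (Moff k i j), (Moff l j i), (Moff k j i), (Moff l i j) by (auto; try lia; lra).
     rewrite (aa_anti l i j), (aa_anti k i j) by auto.
     destruct (aa k i j), (aa l i j). unfold Cre, Cmul, RtoC, Copp, Cconj; simpl. field. auto. }
 assert (Knn : forall i j, (i < d)%nat -> (j < d)%nat -> 0 <= 16 * P i * P j * / (P i + P j)).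
 { intros i j Hi Hj. assert (hi := Pnn i Hi). assert (hj := Pnn j Hj).
   destruct (Req_dec (P i + P j) 0) as [E0|E0].
   - assert (P i = 0) by lra. replace (P i) with 0 by auto. lra.
   - assert (0 < / (P i + P j)) by (apply Rinv_0_lt_compat; lra).
     apply Rmult_le_pos; [|lra]. apply Rmult_le_pos; [|lra]. lra. }
 unfold rhoW in *. split.
 - intros Heq m j k Hm Hj Hk Hjk Pj Pk.
   assert (Z := Diff m m Hm Hm). rewrite (Heq m m Hm Hm) in Z. rewrite Rminus_diag in Z.
   symmetry in Z.
   assert (pz : forall a b, (a < b)%nat -> (b < d)%nat -> 0 < P a -> 0 < P b -> aa m a b = Czero).
   { intros a b Hab Hb Pa Pb.
     assert (Zb := rsum_nonneg_zero d _ (fun j' Hj' => rsum_nonneg j' _ (fun i' Hi' =>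
        Rmult_le_pos _ _ (Knn i' j' ltac:(lia) Hj') (normsq_nonneg _))) Z b Hb).
     assert (Zab := rsum_nonneg_zero b _ (fun i' Hi' =>
        Rmult_le_pos _ _ (Knn i' b ltac:(lia) Hb) (normsq_nonneg _)) Zb a Hab).
     apply normsq_zero. 
     assert (0 < 16 * P a * P b * / (P a + P b)).
     { assert (0 < / (P a + P b)) by (apply Rinv_0_lt_compat; lra).
       apply Rmult_lt_0_compat; [|lra]. apply Rmult_lt_0_compat; [|lra]. lra. }
     apply Rmult_integral in Zab. destruct Zab; [lra|auto]. }
   rewrite A1' by auto.
   destruct (Nat.lt_total j k) as [H1|[H1|H1]].
   + rewrite pz by auto. apply C_ext; unfold Copp, Czero; simpl; ring.
   + contradiction.
   + rewrite (aa_anti m k j) by auto. rewrite pz by auto.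
     apply C_ext; unfold Copp, Cconj, Czero; simpl; ring.
 - intros Q k l Hk Hl. assert (Z := Diff k l Hk Hl).
   rewrite (rsum_ext d _ (fun _ => 0)), rsum_zero in Z. lra.
   intros j Hj. rewrite (rsum_ext j _ (fun _ => 0)), rsum_zero. reflexivity.
   intros i Hi. assert (Hid : (i < d)%nat) by lia.
   assert (hi := Pnn i Hid). assert (hj := Pnn j Hj).
   destruct (Req_dec (P i) 0) as [E0|E0]. rewrite E0; ring.
   destruct (Req_dec (P j) 0) as [E1|E1]. rewrite E1; ring.
   assert (E : aa k i j = Czero).
   { assert (QQ := Q k i j Hk Hid Hj ltac:(lia) ltac:(lra) ltac:(lra)).
     rewrite A1' in QQ by auto.
     transitivity (Copp (Copp (aa k i j))). ring. rewrite QQ. apply C_ext; unfold Copp, Czero; simpl; ring. }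
   rewrite E. unfold Cre, Cmul, Czero, Cconj; simpl. ring.
Qed.

Lemma upd_same x l : upd x l (x l) = x.
Proof. apply functional_extensionality; intros m; unfold upd. destruct (Nat.eqb_spec m l); subst; reflexivity. Qed.

Lemma near_upd p x l t eps : (l < p)%nat -> 0 < eps -> Rabs (t - x l) < eps -> near p x (upd x l t) eps.
Proof. intros Hl He Ht. split.
 - intros l' Hl'. unfold upd. destruct (Nat.eqb_spec l' l). subst; auto. unfold Rminus; rewrite Rplus_opp_r, Rabs_R0; auto.
 - intros l' Hl'. unfold upd. destruct (Nat.eqb_spec l' l). lia. reflexivity. Qed.

Theorem lemma7
  (d p : nat) (Theta : (nat -> R) -> Prop)
  (pk : nat -> (nat -> R) -> R) (w : nat -> nat -> (nat -> R) -> Cplx)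
  (HTheta : open_p p Theta)
  (Hp_smooth : forall k, (k < d)%nat -> smooth_on p Theta (pk k))
  (Hw_smooth : forall k i, (k < d)%nat -> (i < d)%nat ->
     smooth_on p Theta (fun x => Cre (w k i x)) /\
     smooth_on p Theta (fun x => Cim (w k i x)))
  (Hp_range : forall x, Theta x -> forall k, (k < d)%nat -> 0 <= pk k x <= 1)
  (Hp_sum : forall x, Theta x -> rsum d (fun k => pk k x) = 1)
  (Hw_onb : forall x, Theta x -> forall j k, (j < d)%nat -> (k < d)%nat ->
     braket d (fun i => w j i x) (fun i => w k i x) = if Nat.eqb j k then Cone else Czero)
  (theta : nat -> R) (Htheta : Theta theta)
  (* derivatives at theta *)
  (dp : nat -> nat -> R)
  (Hdp : forall k l, (k < d)%nat -> (l < p)%nat -> partial_at (pk k) l theta (dp k l))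
  (dw : nat -> nat -> nat -> Cplx)
  (Hdw : forall k l i, (k < d)%nat -> (l < p)%nat -> (i < d)%nat ->
     partial_at (fun x => Cre (w k i x)) l theta (Cre (dw k l i)) /\
     partial_at (fun x => Cim (w k i x)) l theta (Cim (dw k l i)))
  (drho : nat -> nat -> nat -> Cplx)
  (Hdrho : forall l a b, (l < p)%nat -> (a < d)%nat -> (b < d)%nat ->
     partial_at (fun x => Cre (rho_of d pk w x a b)) l theta (Cre (drho l a b)) /\
     partial_at (fun x => Cim (rho_of d pk w x a b)) l theta (Cim (drho l a b)))
  (* any Hermitian SLDs at theta *)
  (lam : nat -> nat -> nat -> Cplx)
  (Hlam : forall k, (k < p)%nat ->
     hermitian d (lam k) /\
     forall a b, (a < d)%nat -> (b < d)%nat ->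
       drho k a b =
       Cmul (RtoC (/ 2))
         (Cadd (mmul d (rho_of d pk w theta) (lam k) a b)
               (mmul d (lam k) (rho_of d pk w theta) a b))) :
  (forall k l, (k < p)%nat -> (l < p)%nat ->
     H_SLD d (rho_of d pk w theta) lam k l =
     C_L d (fun i => pk i theta) dp (fun i a => w i a theta) dw k l)
  <->
  (forall m j k, (m < p)%nat -> (j < d)%nat -> (k < d)%nat -> j <> k ->
     0 < pk j theta -> 0 < pk k theta ->
     braket d (dw j m) (fun i => w k i theta) = Czero).
Proof.
 destruct (HTheta theta Htheta) as [eps [Heps Hn]].
 apply (core d p (fun i a => w i a theta) (fun i => pk i theta) dp dw drho lam).
 - intros i j Hi Hj. exact (Hw_onb theta Htheta i j Hi Hj).
 - intros i Hi. apply (Hp_range theta Htheta i Hi).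
 - intros m i j Hm Hi Hj.
   assert (D1 : cderiv (fun t => braket d (fun a => w i a (upd theta m t)) (fun a => w j a (upd theta m t))) (theta m)
      (Csum d (fun a => Cadd (Cmul (Cconj (dw i m a)) (w j a (upd theta m (theta m))))
                            (Cmul (Cconj (w i a (upd theta m (theta m)))) (dw j m a))))).
   { unfold braket.
     apply (cderiv_Csum d (fun a t => Cmul (Cconj (w i a (upd theta m t))) (w j a (upd theta m t)))).
     intros a Ha. apply (cderiv_mul (fun t => Cconj (w i a (upd theta m t))) (fun t => w j a (upd theta m t))). apply cderiv_conj. exact (Hdw i m a Hi Hm Ha). exact (Hdw j m a Hj Hm Ha). }
   assert (D2 : cderiv (fun t => braket d (fun a => w i a (upd theta m t)) (fun a => w j a (upd theta m t))) (theta m) Czero).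
   { apply cderiv_local with (G := fun _ => dl i j). apply cderiv_const.
     exists eps; split; auto. intros t Ht.
     exact (Hw_onb _ (Hn _ (near_upd p theta m t eps Hm Heps Ht)) i j Hi Hj). }
   rewrite <- (cderiv_unique _ _ _ _ D1 D2). rewrite upd_same. unfold braket. rewrite <- Csum_add. reflexivity.
 - intros l a b Hl Ha Hb.
   assert (D1 : cderiv (fun t => rho_of d pk w (upd theta l t) a b) (theta l)
     (Csum d (fun k => Cadd (Cmul (RtoC (dp k l)) (Cmul (w k a (upd theta l (theta l))) (Cconj (w k b (upd theta l (theta l))))))
         (Cmul (RtoC (pk k (upd theta l (theta l)))) (Cadd (Cmul (dw k l a) (Cconj (w k b (upd theta l (theta l)))))
              (Cmul (w k a (upd theta l (theta l))) (Cconj (dw k l b)))))))).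
   { unfold rho_of.
     apply (cderiv_Csum d (fun k t => Cmul (RtoC (pk k (upd theta l t))) (Cmul (w k a (upd theta l t)) (Cconj (w k b (upd theta l t)))))).
     intros k Hk. apply (cderiv_mul (fun t => RtoC (pk k (upd theta l t))) (fun t => Cmul (w k a (upd theta l t)) (Cconj (w k b (upd theta l t))))). apply (cderiv_RtoC (fun t => pk k (upd theta l t))). exact (Hdp k l Hk Hl).
     apply (cderiv_mul (fun t => w k a (upd theta l t)) (fun t => Cconj (w k b (upd theta l t)))). exact (Hdw k l a Hk Hl Ha). apply cderiv_conj. exact (Hdw k l b Hk Hl Hb). }
   assert (D2 : cderiv (fun t => rho_of d pk w (upd theta l t) a b) (theta l) (drho l a b)).
   { exact (Hdrho l a b Hl Ha Hb). }
   rewrite (cderiv_unique _ _ _ _ D2 D1). rewrite upd_same. reflexivity.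
 - exact Hlam.
Qed.
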